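(* Consider the following algorithm \textsc{$\ell_1$-Minimization} on input $A\in\mathbb{R}^{n\times m}$, a nonzero $b\in\mathbb{R}^n$ in the column span of $A$, $\epsilon>0$, $M>0$. Set $t=0$, $c^{(0)}=\mathbf{1}/m$, $t'=0$, $s=0\in\mathbb{R}^m$, $\Phi=0\in\mathbb{R}^n$. While $\|c^{(t)}\|_1\le 1+\frac{1}{(1+\epsilon)^2-1}$: (i) let $\phi^{(t)}=(A\mathbf{D}(c^{(t)})A^\top)^+b$ and $g^{(t)}=A^\top\phi^{(t)}/(b^\top\phi^{(t)})$; (ii) if $\|g^{(t)}\|_\infty\le m^{1/3}/M$, set $t'\leftarrow t'+1$, $s\leftarrow s+|g^{(t)}|$ (entrywise absolute value), $\Phi\leftarrow\Phi+\phi^{(t)}/(b^\top\phi^{(t)})$; (iii) if $t'\ge1$ and $\|s\|_\infty/t'\le\frac{1}{(1-\epsilon)M}$, return $\Phi/t'$; (iv) let $\alpha^{(t)}_i=1$ if $|g^{(t)}_i|\le\frac{1}{(1-\epsilon)M}$ and $\alpha^{(t)}_i=(g^{(t)}_i)^2M^2$ otherwise; (v) if $\alpha^{(t)}=\mathbf{1}$, return $\phi^{(t)}$; (vi) set $c^{(t+1)}_i=c^{(t)}_i\alpha^{(t)}_i$ for all $i$ and $t\leftarrow t+1$. When the while loop exits, return $x=\mathbf{D}(c^{(t)})A^\top(A\mathbf{D}(c^{(t)})A^\top)^+b$. Whenever this algorithm returns after the while loop exits, the final conductance vector $c=c^{(t)}$ satisfies \[ \frac{1}{\mathcal{E}_{\|c\|_1/c}(b)}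 \geq \frac{1}{(1+\epsilon)^2M^2}, \] where $\|c\|_1/c$ denotes the vector $(\|c\|_1/c_i)_i$ and, for positive $w\in\mathbb{R}^m$, $\mathcal{E}_{w}(b)=\min_{x:Ax=b}\sum_i w_i x_i^2$.
   Context: $\mathbf{1}$ is the all-ones vector; $\mathbf{D}(c)$ is the diagonal matrix with diagonal $c$; $L^+$ is the Moore–Penrose pseudoinverse. *)

(* Defs.v *)
From HB Require Import structures.
From mathcomp Require Import all_boot all_order all_algebra.
From mathcomp Require Import all_classical all_reals all_analysis.
Set Implicit Arguments. Unset Strict Implicit. Unset Printing Implicit Defensive.
Import Order.TTheory GRing.Theory Num.Theory.
Local Open Scope classical_set_scope.
Local Open Scope ring_scope.

(* Moore–Penrose pseudoinverse: the (unique) X satisfying the four Penrose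
   equations; chosen with xget (it exists for every real matrix). *)
Definition is_mpinv (R : realType) (p q : nat) (L : 'M[R]_(p, q)) (X : 'M[R]_(q, p)) : Prop :=
  [/\ L *m X *m L = L, X *m L *m X = X, (L *m X)^T = L *m X & (X *m L)^T = X *m L].

Definition mpinv (R : realType) (p q : nat) (L : 'M[R]_(p, q)) : 'M[R]_(q, p) :=
  xget 0 [set X | is_mpinv L X].

Definition norm1 (R : realType) (k : nat) (v : 'cV[R]_k) : R := \sum_i `|v i 0|.
Definition norminf (R : realType) (k : nat) (v : 'cV[R]_k) : R := \big[Num.max/0]_i `|v i 0|.

Section Algorithm.
Variables (R : realType) (n m : nat) (A : 'M[R]_(n, m)) (b : 'cV[R]_n) (eps M : R).

Definition Dc (c : 'cV[R]_m) : 'M[R]_m := diag_mx c^T.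
Definition phi (c : 'cV[R]_m) : 'cV[R]_n := mpinv (A *m Dc c *m A^T) *m b.
Definition bdot (v : 'cV[R]_n) : R := (b^T *m v) 0 0.
Definition gvec (c : 'cV[R]_m) : 'cV[R]_m := (bdot (phi c))^-1 *: (A^T *m phi c).

Definition loop_bound : R := 1 + ((1 + eps) ^+ 2 - 1)^-1.
Definition thr : R := ((1 - eps) * M)^-1.

Definition alpha (c : 'cV[R]_m) : 'cV[R]_m :=
  \col_i (if `|gvec c i 0| <= thr then 1 else (gvec c i 0) ^+ 2 * M ^+ 2).

Record state := St { st_c : 'cV[R]_m; st_tp : nat; st_s : 'cV[R]_m; st_Phi : 'cV[R]_n }.

(* body of the while loop: None = the algorithm returns inside the body
   (at step (iii) or (v)); Some st' = continue with state st'. *)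
Definition step (st : state) : option state :=
  let c := st_c st in
  let g := gvec c in
  let ph := phi c in
  let upd := norminf g <= powR (m%:R) (3%:R^-1) / M in
  let tp := if upd then (st_tp st).+1 else st_tp st in
  let s := if upd then st_s st + map_mx (fun x => `|x|) g else st_s st in
  let Phi := if upd then st_Phi st + (bdot ph)^-1 *: ph else st_Phi st in
  if (1 <= tp)%N && (norminf s / tp%:R <= thr) then None
  else if alpha c == const_mx 1 then None
  else Some (St (\col_i (c i 0 * alpha c i 0)) tp s Phi).

Definition init : state := St (const_mx (m%:R^-1)) 0 0 0.

(* run t = Some st iff the loop performed t full iterations (while condition
   true each time, no return inside the body), reaching state st. *)
Fixpoint run (t : nat) : option state :=
  match t with
  | 0 => Some init
  | t'.+1 => match run t' with
             | Some st => if norm1 (st_c st) <= loop_bound then step st else None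
             | None => None
             end
  end.

Definition energy (w : 'cV[R]_m) : R :=
  inf [set \sum_i w i 0 * (x i 0) ^+ 2 | x in [set x : 'cV[R]_m | A *m x = b]].

End Algorithm.

(* Main.v *)
Require Import Defs.
From HB Require Import structures.
From mathcomp Require Import all_boot all_order all_algebra.
From mathcomp Require Import all_classical all_reals all_analysis.
From mathcomp Require Import ring lra.
Import Order.TTheory GRing.Theory Num.Theory.
Set Implicit Arguments. Unset Strict Implicit. Unset Printing Implicit Defensive.
Local Open Scope ring_scope.

Section MP.
Variable R : realType.

Lemma sqsum0 (p : nat) (u : 'rV[R]_p) : u *m u^T = 0 -> u = 0.
Proof.
move=> H.
have E : \sum_j u 0 j ^+ 2 = 0.
  have -> : \sum_j u 0 j ^+ 2 = (u *m u^T) 0 0.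
    by rewrite mxE; apply: eq_bigr => j _; rewrite mxE expr2.
  by rewrite H mxE.
apply/rowP => j; rewrite mxE; apply/eqP; rewrite -sqrf_eq0; apply/eqP.
by apply: (psumr_eq0P _ E) => // i _; exact: sqr_ge0.
Qed.

Lemma gram_unit (p r : nat) (F : 'M[R]_(p, r)) : \rank F = r -> F^T *m F \in unitmx.
Proof.
move=> rF; rewrite -row_free_unit; apply: inj_row_free => v Hv.
have Hrf : row_free F^T by rewrite /row_free mxrank_tr rF.
have H0 : (v *m F^T) *m (v *m F^T)^T = 0.
  by rewrite trmx_mul trmxK mulmxA -(mulmxA v) Hv mul0mx.
have H1 := sqsum0 H0.
apply: (row_free_inj Hrf); by rewrite /= H1 mul0mx.
Qed.

Lemma mpinv_exists (p q : nat) (L : 'M[R]_(p, q)) : exists X, is_mpinv L X.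
Proof.
set F := col_base L; set G := row_base L.
have uF : F^T *m F \in unitmx by apply: gram_unit; apply/eqP; exact: col_base_full.
have uG : G *m G^T \in unitmx.
  have := @gram_unit _ _ G^T; rewrite trmxK mxrank_tr; apply; apply/eqP; exact: row_base_free.
have eL : L = F *m G by rewrite mulmx_base.
clearbody F G.
pose iF := invmx (F^T *m F); pose iG := invmx (G *m G^T).
exists (G^T *m iG *m iF *m F^T).
have HLX : L *m (G^T *m iG *m iF *m F^T) = F *m iF *m F^T.
  by rewrite [L in L *m _]eL !mulmxA -(mulmxA F G G^T) /iG mulmxK.
have HXL : (G^T *m iG *m iF *m F^T) *m L = G^T *m iG *m G.
  by rewrite [L in _ *m L]eL !mulmxA -(mulmxA _ F^T F) /iF mulmxKV.
have siF : iF^T = iF by rewrite /iF trmx_inv trmx_mul trmxK.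
have siG : iG^T = iG by rewrite /iG trmx_inv trmx_mul trmxK.
split.
- by rewrite HLX [X in _ *m X = _]eL !mulmxA -(mulmxA _ F^T F) /iF mulmxKV // -eL.
- by rewrite HXL !mulmxA -(mulmxA _ G G^T) /iG mulmxKV.
- by rewrite HLX !trmx_mul trmxK siF mulmxA.
- by rewrite HXL !trmx_mul trmxK siG mulmxA.
Qed.

Lemma mpinvP (p q : nat) (L : 'M[R]_(p, q)) : is_mpinv L (mpinv L).
Proof. exact: xgetPex (mpinv_exists L). Qed.
End MP.


Lemma alg (R : realType) (K E D S S' E' : R) : 0 < K -> 0 < E -> 0 <= E' -> E' <= D ->
  (S - 1) * E <= K -> S' = S + K / E - K * D / E ^+ 2 -> (S' - 1) * E' <= K.
Proof.
move=> K0 E0 E'0 E'D HS ->.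
set u := E^-1.
have u0 : 0 < u by rewrite invr_gt0.
have HS' : S - 1 <= K * u.
  by rewrite -(ler_pM2r E0) -mulrA mulVf ?gt_eqF // mulr1.
have -> : S + K / E - K * D / E ^+ 2 - 1 = (S - 1) + K * u - K * D * u ^+ 2.
  by rewrite /u exprVn; ring.
set T := S - 1 + K * u - K * D * u ^+ 2.
have HT : T <= 2 * K * u - K * D * u ^+ 2 by rewrite /T; lra.
case: (lerP T 0) => T0.
  by apply: (le_trans (y := 0)); [exact: mulr_le0_ge0 | exact: ltW].
have D0 : 0 <= D by exact: le_trans E'D.
apply: (le_trans (y := T * D)); first by rewrite ler_pM2l.
apply: (le_trans (y := (2 * K * u - K * D * u ^+ 2) * D)); first by rewrite ler_wpM2r.
have : 0 <= K * (1 - D * u) ^+ 2 by apply: mulr_ge0; [exact: ltW | exact: sqr_ge0].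
have -> : (2 * K * u - K * D * u ^+ 2) * D = K - K * (1 - D * u) ^+ 2 by ring.
move=> H; lra.
Qed.

Section Main.
Variables (R : realType) (n m : nat) (A : 'M[R]_(n, m)) (b : 'cV[R]_n).
Hypothesis hb : exists y, A *m y = b.

Definition Lmat (c : 'cV[R]_m) := A *m Dc c *m A^T.
Definition hv (c : 'cV[R]_m) := A^T *m phi A b c.
Definition flow (c : 'cV[R]_m) := Dc c *m hv c.
Definition En (c : 'cV[R]_m) := bdot b (phi A b c).
Definition pos (c : 'cV[R]_m) := forall i, 0 < c i 0.

Lemma dotE k (u v : 'cV[R]_k) : (u^T *m v) 0 0 = \sum_i u i 0 * v i 0.
Proof. by rewrite mxE; apply: eq_bigr => i _; rewrite mxE. Qed.

Lemma DcE c (v : 'cV[R]_m) i : (Dc c *m v) i 0 = c i 0 * v i 0.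
Proof. by rewrite /Dc mul_diag_mx !mxE. Qed.

Lemma quadL c (v : 'cV[R]_n) :
  (v^T *m Lmat c *m v) 0 0 = \sum_i c i 0 * (A^T *m v) i 0 ^+ 2.
Proof.
have -> : v^T *m Lmat c *m v = (A^T *m v)^T *m (Dc c *m (A^T *m v)).
  by rewrite /Lmat trmx_mul trmxK !mulmxA.
rewrite dotE; apply: eq_bigr => i _; rewrite DcE; ring.
Qed.

Lemma range c : pos c -> Lmat c *m (mpinv (Lmat c) *m b) = b.
Proof.
move=> pc; have [y0 Hy0] := hb.
set L := Lmat c; set X := mpinv L.
have [H1 _ H3 _] := mpinvP L.
set v := b - L *m X *m b.
have vL : v^T *m L = 0.
  by rewrite /v linearB /= trmx_mul H3 mulmxBl -(mulmxA _ _ L) H1 subrr.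

have w0 : A^T *m v = 0.
  have q0 : \sum_i c i 0 * (A^T *m v) i 0 ^+ 2 = 0.
    by rewrite -quadL -/L vL mul0mx mxE.
  apply/colP => i; rewrite [RHS]mxE.
  have := psumr_eq0P (fun i _ => mulr_ge0 (ltW (pc i)) (sqr_ge0 ((A^T *m v) i 0))) q0 (erefl true) (i:=i).
  move/eqP; rewrite mulf_eq0 sqrf_eq0 (gt_eqF (pc i)) /=; by move/eqP.
have vv : v^T *m v = 0.
  rewrite {2}/v mulmxBr -{1}Hy0 mulmxA -(trmxK A) -trmx_mul w0 trmx0 mul0mx.
  by rewrite [v^T *m _]mulmxA [v^T *m _]mulmxA vL !mul0mx subrr.
have : v = 0.
  have := @sqsum0 R _ v^T; rewrite trmxK => /(_ vv) /eqP.
  by rewrite trmx_eq0 => /eqP.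
by move/eqP; rewrite subr_eq0 => /eqP Hb; rewrite mulmxA -Hb.
Qed.

Lemma flow_ok c : pos c -> A *m flow c = b.
Proof.
move=> pc; rewrite /flow /hv /phi -{2}(range pc) /Lmat.
by rewrite !mulmxA.
Qed.

Lemma En_dot c y : pos c -> A *m y = b -> En c = \sum_i y i 0 * hv c i 0.
Proof.
move=> pc Hy; rewrite /En /bdot -{1}Hy trmx_mul -mulmxA -dotE.
by rewrite /hv.
Qed.

Lemma En_sum c : pos c -> En c = \sum_i c i 0 * hv c i 0 ^+ 2.
Proof.
move=> pc; rewrite (En_dot pc (flow_ok pc)); apply: eq_bigr => i _.
by rewrite /flow DcE; ring.
Qed.

Lemma En_le c y : pos c -> A *m y = b -> En c <= \sum_i y i 0 ^+ 2 / c i 0.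
Proof.
move=> pc Hy.
have -> : En c = \sum_i (2 * (y i 0 * hv c i 0) - c i 0 * hv c i 0 ^+ 2).
  rewrite sumrB -mulr_sumr -(En_dot pc Hy) -(En_sum pc); ring.
apply: ler_sum => i _.
have ci := pc i.
rewrite -subr_ge0.
have -> : y i 0 ^+ 2 / c i 0 - (2 * (y i 0 * hv c i 0) - c i 0 * hv c i 0 ^+ 2)
   = (y i 0 - c i 0 * hv c i 0) ^+ 2 / c i 0.
  by field; rewrite gt_eqF.
by apply: divr_ge0; [exact: sqr_ge0 | exact: ltW].
Qed.

Lemma flow_energy c : pos c -> \sum_i flow c i 0 ^+ 2 / c i 0 = En c.
Proof.
move=> pc; rewrite (En_sum pc); apply: eq_bigr => i _.
by rewrite /flow DcE; field; rewrite gt_eqF.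
Qed.

Lemma En_pos c : pos c -> b != 0 -> 0 < En c.
Proof.
move=> pc bn0; rewrite (En_sum pc) lt_def; apply/andP; split; last first.
  by apply: sumr_ge0 => i _; apply: mulr_ge0; [exact: ltW | exact: sqr_ge0].
apply/negP => /eqP H.
have h0 : forall i, hv c i 0 = 0.
  move=> i; have := psumr_eq0P (fun i _ => mulr_ge0 (ltW (pc i)) (sqr_ge0 (hv c i 0))) H (erefl true) (i:=i).
  by move/eqP; rewrite mulf_eq0 sqrf_eq0 (gt_eqF (pc i)) /= => /eqP.
have f0 : flow c = 0 by apply/colP => i; rewrite /flow DcE h0 mulr0 mxE.
by move: bn0; rewrite -(flow_ok pc) f0 mulmx0 eqxx.
Qed.

Lemma norm1_pos c : pos c -> norm1 c = \sum_i c i 0.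
Proof. by move=> pc; apply: eq_bigr => i _; rewrite ger0_norm // ltW. Qed.

Lemma gvecE c i : gvec A b c i 0 = (En c)^-1 * hv c i 0.
Proof. by rewrite /gvec mxE. Qed.

Lemma step_inv (eps M : R) c : 0 < eps -> eps < 1 -> 0 < M -> b != 0 -> pos c ->
  (norm1 c - 1) * En c <= M ^+ 2 ->
  pos (\col_i (c i 0 * alpha A b eps M c i 0)) /\
  (norm1 (\col_i (c i 0 * alpha A b eps M c i 0)) - 1)
     * En (\col_i (c i 0 * alpha A b eps M c i 0)) <= M ^+ 2.
Proof.
move=> e0 e1 M0 bn0 pc HS.
set c' := \col_i (c i 0 * alpha A b eps M c i 0).
set E := En c; set K := M ^+ 2.
have E0 : 0 < E by exact: En_pos.
have K0 : 0 < K by rewrite /K exprn_gt0.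
have thr0 : 0 < thr eps M by rewrite /thr invr_gt0 mulr_gt0 // subr_gt0.
have key : forall i, 0 < alpha A b eps M c i 0 /\
   c i 0 * alpha A b eps M c i 0 - c i 0 =
   K / E ^+ 2 * (c i 0 * hv c i 0 ^+ 2)
   - K / E ^+ 2 * ((c i 0 * hv c i 0) ^+ 2 / (c i 0 * alpha A b eps M c i 0)).
  move=> i; have ci := pc i.
  rewrite /alpha mxE; case: ifP => H.
    split=> //; field; rewrite ?gt_eqF //.
  have g0 : gvec A b c i 0 != 0.
    apply/negP => /eqP g0; move: H; rewrite g0 normr0 ltW //.
  have h0 : hv c i 0 != 0.
    by move: g0; rewrite gvecE mulf_eq0 negb_or => /andP [].
  split.
    by apply: mulr_gt0; [rewrite lt_def sqrf_eq0 g0 sqr_ge0 | ].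
  rewrite gvecE /K -/E; field.
  by rewrite h0 gt_eqF // gt_eqF // gt_eqF.
have pc' : pos c' by move=> i; rewrite mxE; apply: mulr_gt0 => //; case: (key i).
split => //.
pose D := \sum_i flow c i 0 ^+ 2 / c' i 0.
apply: (@alg _ K E D (norm1 c) (norm1 c')) => //.
- exact: ltW (En_pos pc' bn0).
- exact: En_le pc' (flow_ok pc).
- have sE : \sum_i c' i 0 - \sum_i c i 0 = K / E - K * D / E ^+ 2.
    rewrite -sumrB.
    rewrite (eq_bigr (fun i => K / E ^+ 2 * (c i 0 * hv c i 0 ^+ 2)
      - K / E ^+ 2 * (flow c i 0 ^+ 2 / c' i 0))); last first.
      by move=> i _; rewrite mxE (proj2 (key i)) /flow DcE mxE.
    rewrite sumrB -!mulr_sumr -(En_sum pc) -/E -/D.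
    by field; rewrite gt_eqF.
  have -> : norm1 c' = norm1 c + (norm1 c' - norm1 c) by ring.
  rewrite [in norm1 c' - _](norm1_pos pc) (norm1_pos pc') sE; ring.
Qed.

Lemma m_pos : b != 0 -> (0 < m)%N.
Proof.
move=> bn0; case: m A hb bn0 => // A0 [y <-] /negP []; apply/eqP/colP => i.
by rewrite !mxE big_ord0.
Qed.

Lemma run_inv (eps M : R) T st : 0 < eps -> eps < 1 -> 0 < M -> b != 0 ->
  run A b eps M T = Some st ->
  pos (st_c st) /\ (norm1 (st_c st) - 1) * En (st_c st) <= M ^+ 2.
Proof.
move=> e0 e1 M0 bn0; elim: T st => [|T IH] st /=.
  move=> [<-] /=; have m0 := m_pos bn0.
  have pc : pos (const_mx m%:R^-1) by move=> i; rewrite mxE invr_gt0 ltr0n.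
  split => //; rewrite (norm1_pos pc).
  rewrite (eq_bigr (fun _ => m%:R^-1)); last by move=> i _; rewrite mxE.
  rewrite sumr_const card_ord -[_ *+ m]mulr_natr mulVf ?pnatr_eq0 -?lt0n // subrr mul0r.
  by rewrite exprn_ge0 // ltW.
case Hr: (run A b eps M T) => [st0|] //; case: ifP => // _.
have [pc HS] := IH _ Hr.
rewrite /step; case: ifP => // _; case: ifP => // _ [<-] /=.
exact: step_inv.
Qed.
End Main.

Theorem lemma4p7 (R : realType) (n m : nat) (A : 'M[R]_(n, m)) (b : 'cV[R]_n)
  (eps M : R) (T : nat) (st : state R n m) :
  b != 0 -> (exists x : 'cV[R]_m, A *m x = b) ->
  0 < eps -> eps < 1 -> 0 < M ->
  run A b eps M T = Some st ->
  ~~ (norm1 (st_c st) <= loop_bound eps) ->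
  ((1 + eps) ^+ 2 * M ^+ 2)^-1
    <= (energy A b (\col_i (norm1 (st_c st) / st_c st i 0)))^-1.
Proof.
move=> bn0 hb e0 e1 M0 Hr Hout.
have [pc HS] := run_inv hb e0 e1 M0 bn0 Hr.
move: pc HS Hout; set c := st_c st => pc HS Hout.
set S := norm1 c; set E := En A b c.
have E0 : 0 < E by exact: En_pos.
have HSb : loop_bound eps < S by rewrite ltNge.
set d := (1 + eps) ^+ 2 - 1.
have d0 : 0 < d by rewrite /d; nra.
have HSd : d^-1 < S - 1 by move: HSb; rewrite /loop_bound -/d; lra.
have Hd1 : 1 < d * (S - 1).
  by rewrite -(ltr_pM2l d0) mulfV ?gt_eqF in HSd.
have S0 : 0 < S by have := invr_gt0 d; rewrite d0 => /esym H; lra.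
have val : forall x : 'cV[R]_m, \sum_i (\col_i (S / c i 0)) i 0 * x i 0 ^+ 2
   = S * \sum_i x i 0 ^+ 2 / c i 0.
  move=> x; rewrite mulr_sumr; apply: eq_bigr => i _; rewrite mxE; ring.
have -> : energy A b (\col_i (S / c i 0)) = S * E.
  rewrite /energy; set X := (X in inf X).
  have lb : lbound X (S * E).
    move=> y [x /= Hx <-]; rewrite val ler_pM2l //; exact: En_le.
  have inX : X (S * E).
    exists (flow A b c); first exact: flow_ok.
    by rewrite val flow_energy.
  apply/le_anti/andP; split.
    by apply: (ge_inf _ inX); exists (S * E).
  by apply: lb_le_inf => //; exists (S * E).
rewrite lef_pV2 ?posrE ?mulr_gt0 ?exprn_gt0 //; try lra.
have h1 : E < d * (S - 1) * E by rewrite -{1}(mul1r E) ltr_pM2r.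
have h2 : d * ((S - 1) * E) <= d * M ^+ 2 by rewrite ler_pM2l.
have -> : (1 + eps) ^+ 2 = 1 + d by rewrite /d; ring.
move: HS h1 h2; rewrite -/S -/E => HS h1 h2.
nra.
Qed.
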